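(* Let $R\subseteq S$ be a module-finite generically separable inclusion of $F$-finite normal domains of characteristic $p>0$, with $K=\mathrm{Frac}R$, $L=\mathrm{Frac}S$. Suppose $\bar\phi\in\mathrm{Hom}_S(S^{1/p^e},S)$ extends a non-zero $\phi\in\mathrm{Hom}_R(R^{1/p^e},R)$, and that $\psi\in\mathrm{Hom}_R(S,R)$ satisfies $\psi\circ\bar\phi=\phi\circ\psi^{1/p^e}$ on $S^{1/p^e}$. Then there exists $u\in\mathbb F_{p^e}\cap L$ such that $\psi(-)=\mathrm{Tr}_{L/K}(u\cdot-)$.
   Context: $R^{1/p^e}\subseteq S^{1/p^e}$ denote the rings of $p^e$-th roots inside an algebraic closure of $L$. ''$\bar\phi$ extends $\phi$'' means $\bar\phi|_{R^{1/p^e}}=\phi$. $\psi^{1/p^e}\colon S^{1/p^e}\to R^{1/p^e}$ is $s^{1/p^e}\mapsto\psi(s)^{1/p^e}$. $\mathbb F_{p^e}\cap L$ denotes the elements $u\in L$ with $u^{p^e}=u$. $\mathrm{Tr}_{L/K}$ is the field trace. $F$-finite: Frobenius is finite. *)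

(* Defs.v *)
From HB Require Import structures.
From mathcomp Require Import all_boot all_order all_algebra all_field.
Set Implicit Arguments. Unset Strict Implicit. Unset Printing Implicit Defensive.
Import GRing.Theory.
Local Open Scope ring_scope.

Definition is_subring (T : comNzRingType) (A : pred T) : Prop :=
  1 \in A /\ forall x y, x \in A -> y \in A -> (x - y \in A) /\ (x * y \in A).

Definition is_frac_field (F : fieldType) (A : pred F) : Prop :=
  forall x : F, exists a b, [/\ a \in A, b \in A, b != 0 & x = a / b].

Definition integral_over (F : fieldType) (A : pred F) (x : F) : Prop :=
  exists2 q : {poly F}, (q \is monic) && (all (fun c => c \in A) q) & root q x.

(* A is normal: integrally closed in its fraction field (the ambient F). *)
Definition is_normal (F : fieldType) (A : pred F) : Prop :=
  forall x : F, integral_over A x -> x \in A.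

(* F-finite: A is a finitely generated module over its subring A^p
   (i.e. the Frobenius of A is finite). *)
Definition F_finite (F : fieldType) (p : nat) (A : pred F) : Prop :=
  exists g : seq F, all (fun s => s \in A) g /\
    forall a, a \in A -> exists c : nat -> F,
      (forall i, c i \in A) /\ a = \sum_(i < size g) (c i) ^+ p * g`_i.

Definition module_finite (K : fieldType) (L : fieldExtType K)
    (R : pred K) (S : pred L) : Prop :=
  exists g : seq L, all (fun s => s \in S) g /\
    forall s, s \in S -> exists c : nat -> K,
      (forall i, c i \in R) /\ s = \sum_(i < size g) (c i)%:A * g`_i.

Definition fieldTrace (K : fieldType) (L : fieldExtType K) (x : L) : K :=
  \tr (passmx.mxof (vbasis {:L}%VS) (vbasis {:L}%VS) (amulr x)).

(* An element phi of Hom_A(A^{1/q}, A), q = p^e, recorded through the map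
   f : A -> A, f a := phi(a^{1/q}); A-linearity of phi becomes
   additivity plus f (b^q * a) = b * f a. *)
Definition is_pinv_linear (F : fieldType) (q : nat) (A : pred F) (f : F -> F) :=
  [/\ forall a, a \in A -> f a \in A,
      forall a b, a \in A -> b \in A -> f (a + b) = f a + f b
    & forall a b, a \in A -> b \in A -> f (b ^+ q * a) = b * f a].

(* Main.v *)
From HB Require Import structures.
From mathcomp Require Import all_boot all_order all_algebra all_field all_fingroup.
Require Import Defs.
Import GRing.Theory.
Local Open Scope ring_scope.

Lemma deriv_prod_seq (R : comNzRingType) (I : eqType) (s : seq I) (f : I -> {poly R}) :
  uniq s -> (\prod_(i <- s) f i)^`() = \sum_(j <- s) (f j)^`() * \prod_(i <- s | i != j) f i.
Proof.
elim: s => [|a s IH] /=; first by rewrite !big_nil -polyC1 derivC.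
case/andP => nas us.
rewrite !big_cons derivM IH // eqxx /=.
have E1 : \prod_(i <- s | i != a) f i = \prod_(i <- s) f i.
  rewrite big_seq_cond [RHS]big_seq; apply: eq_bigl => i.
  by case: (boolP (i \in s)) => //= ins; apply: contraNneq nas => <-.
rewrite E1; congr (_ + _).
rewrite big_distrr /= [RHS]big_seq [LHS]big_seq; apply: eq_bigr => j js.
rewrite big_cons; have -> : (a != j) by apply: contraNneq nas => ->.
by rewrite mulrCA.
Qed.

Lemma deriv_prod (R : comNzRingType) (I : finType) (f : I -> {poly R}) :
  (\prod_i f i)^`() = \sum_j (f j)^`() * \prod_(i | i != j) f i.
Proof. exact: deriv_prod_seq (index_enum_uniq _). Qed.

Lemma deriv_sign (R : comNzRingType) (b : bool) (q : {poly R}) :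
  ((-1) ^+ b * q)^`() = (-1) ^+ b * q^`().
Proof. by case: b; rewrite ?expr0 ?expr1 ?mul1r ?mulN1r ?derivN. Qed.

Lemma deriv_char_poly (R : comNzRingType) n (A : 'M[R]_n) :
  (char_poly A)^`() = \tr (\adj (char_poly_mx A)).
Proof.
rewrite /char_poly /determinant /mxtrace.
rewrite (@raddf_sum _ _ (@deriv R)).
transitivity (\sum_(s : 'S_n) (-1) ^+ s * \sum_j ((char_poly_mx A j (s j))^`() * \prod_(i | i != j) char_poly_mx A i (s i))).
  apply: eq_bigr => s _; rewrite -deriv_prod; exact: deriv_sign.
under eq_bigr => s _ do rewrite big_distrr /=.
rewrite exchange_big /=; apply: eq_bigr => j _.
rewrite mxE expand_cofactor [RHS]big_mkcond /=; apply: eq_bigr => s _.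
rewrite {1}/char_poly_mx !mxE derivB derivMn derivX derivC subr0 eq_sym.
case: eqP => _; last by rewrite mulr0n mul0r mulr0.
rewrite mulr1n mul1r; congr (_ * _); apply: eq_bigl => i; by rewrite eq_sym.
Qed.

Lemma tr_adj_char_eq0 (R : comNzRingType) n (A : 'M[R]_n) :
  (forall k, \tr (A ^+ k) = 0) -> \tr (\adj (char_poly_mx A)) = 0.
Proof.
case: n A => [|n] A trA0; first by rewrite /mxtrace big_ord0.
set M := char_poly_mx A; set N := \adj M.
have MN : M *m N = (char_poly A)%:M := mul_mx_adj M.
clearbody N.
pose B i := \matrix_(a, b) (N a b)`_i : 'M[R]_n.+1.
have rec i : B i = ((char_poly A)`_i.+1)%:M + A *m B i.+1.
  apply/matrixP => a b.
  have S : \sum_j A a j * B i.+1 j b = \sum_c ((map_mx (@polyC R) A) a c * N c b)`_i.+1.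
    by apply: eq_bigr => c _; rewrite !mxE coefCM.
  rewrite [RHS]mxE [X in _ + X]mxE S [X in _ = X + _]mxE [B i a b]mxE.
  have := congr1 (fun X : 'M[{poly R}]_n.+1 => (X a b)`_i.+1) MN => /=.
  rewrite /M /char_poly_mx mulmxBl mul_scalar_mx !mxE coefB coefXM /= coef_sum coefMn => E.
  by rewrite -E subrK.
pose m := \max_(ab : 'I_n.+1 * 'I_n.+1) size (N ab.1 ab.2).
have B0 i : (m <= i)%N -> B i = 0.
  move=> le_mi; apply/matrixP => a b; rewrite !mxE nth_default //.
  apply: leq_trans le_mi; exact: (leq_bigmax (a, b)).
pose Q (X : 'M[R]_n.+1) := forall k, \tr (A ^+ k *m X) = 0.
have QB : forall d i, (m <= i + d)%N -> Q (B i).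
  elim=> [|d IH] i.
    by rewrite addn0 => /B0 -> k; rewrite mulmx0 mxtrace0.
  rewrite addnS -addSn => /IH QBi k.
  rewrite rec mulmxDr mxtraceD mul_mx_scalar mxtraceZ trA0 mulr0 add0r.
  by rewrite mulmxA mulmxE -exprSr -mulmxE.
apply/polyP => i; rewrite coef0 /mxtrace coef_sum.
transitivity (\tr (A ^+ 0 *m B i)); last exact: QB m i (leq_addl _ _) 0%N.
by rewrite expr0 mul1mx /mxtrace; apply: eq_bigr => a _; rewrite mxE.
Qed.


Lemma det_expn (R : comNzRingType) n (M : 'M[R]_n.+1) k : \det (M ^+ k) = \det M ^+ k.
Proof.
elim: k => [|k IH]; first by rewrite !expr0 det1.
by rewrite !exprS detM IH.
Qed.

Lemma map_mx_expn (aR rR : comNzRingType) (f : {rmorphism aR -> rR}) n (A : 'M[aR]_n.+1) k :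
  map_mx f (A ^+ k) = (map_mx f A) ^+ k.
Proof.
elim: k => [|k IH]; first by rewrite !expr0 map_mx1.
by rewrite !exprS -!mulmxE map_mxM IH.
Qed.

Lemma exp_pchar_comp (R : comNzRingType) (p : nat) (q : {poly R}) (pR : p \in [pchar R]) :
  q ^+ p = (map_poly (pFrobenius_aut pR) q) \Po 'X^p.
Proof.
have pP : p \in [pchar {poly R}] by rewrite pchar_poly.
elim/poly_ind: q => [|q c IH].
  by rewrite map_poly0 comp_poly0 expr0n gtn_eqF // prime_gt0 // (pcharf_prime pR).
rewrite -(pFrobenius_autE pP) rmorphD rmorphM /= !pFrobenius_autE IH.
rewrite rmorphD rmorphM /= map_polyX map_polyC /= comp_poly_MXaddC.
by rewrite -polyC_exp -(pFrobenius_autE pR).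
Qed.

Lemma coef_exp_pchar (R : comNzRingType) (p : nat) (q : {poly R}) i :
  p \in [pchar R] -> (q ^+ p)`_(p * i) = q`_i ^+ p.
Proof.
move=> pR; rewrite (@exp_pchar_comp _ _ q pR) coef_comp_poly_Xn ?prime_gt0 ?(pcharf_prime pR) //.
by rewrite dvdn_mulr // mulKn ?prime_gt0 ?(pcharf_prime pR) // coef_map.
Qed.

Lemma tr_exp_pchar (R : comNzRingType) (p n : nat) (A : 'M[R]_n) :
  p \in [pchar R] -> \tr (A ^+ p) = \tr A ^+ p.
Proof.
move=> pR; have pp := pcharf_prime pR; have p0 := prime_gt0 pp.
case: n A => [|n] A.
  by rewrite /mxtrace !big_ord0 expr0n gtn_eqF.
pose P := {poly R}.
have pP : p \in [pchar P] by rewrite pchar_poly.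
have pM : p \in [pchar 'M[P]_n.+1] by rewrite (rmorph_pchar (@scalar_mx P n.+1)).
set B := map_mx (@polyC R) A.
have cXB : GRing.comm ('X%:M : 'M[P]_n.+1) B by rewrite /GRing.comm -!mulmxE scalar_mxC.
have e1 : map_mx (comp_poly 'X^p) (char_poly_mx (A ^+ p)) = (char_poly_mx A) ^+ p.
  rewrite /char_poly_mx -(pFrobenius_autE pM) pFrobenius_autB_comm // !pFrobenius_autE.
  rewrite -rmorphXn /= -map_mx_expn.
  apply/matrixP => i j; rewrite !mxE.
  rewrite comp_polyB comp_polyC; congr (_ - _).
  by case: (i == j); rewrite ?mulr1n ?mulr0n ?comp_polyX ?comp_poly0.
have e2 : (char_poly (A ^+ p)) \Po 'X^p = char_poly A ^+ p.
  by rewrite /char_poly -det_map_mx e1 det_expn.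
have := congr1 (fun q : {poly R} => q`_(p * n)) e2 => /=.
rewrite coef_comp_poly_Xn // dvdn_mulr // mulKn // char_poly_trace //=.
rewrite coef_exp_pchar // char_poly_trace //= -(pFrobenius_autE pR) pFrobenius_autN pFrobenius_autE.
by move/oppr_inj.
Qed.

Section Tr.
Variables (K : fieldType) (L : fieldExtType K).

Definition Mx (x : L) := passmx.mxof (vbasis {:L}) (vbasis {:L}) (amulr x).

Lemma MxM (x y : L) : Mx (x * y) = Mx x *m Mx y.
Proof.
rewrite /Mx rmorphM /=.
have B := vbasisP (@fullv K L).
by rewrite -passmx.mxof_comp.
Qed.

Lemma MxX (x : L) k : Mx (x ^+ k) = Mx x ^+ k.
Proof.
elim: k => [|k IH]; first by rewrite !expr0 /Mx rmorph1 passmx.mxof1 ?(basis_free (vbasisP _)).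
by rewrite exprS MxM IH mulmxE -exprS.
Qed.

Lemma fieldTraceE (x : L) : fieldTrace x = \tr (Mx x).
Proof. by []. Qed.

Lemma fieldTrace_lin (a : K) (x y : L) : fieldTrace (a *: x + y) = a * fieldTrace x + fieldTrace y.
Proof. by rewrite !fieldTraceE /Mx linearP passmx.mxof_linear /= mxtraceD mxtraceZ. Qed.

Lemma fieldTraceD (x y : L) : fieldTrace (x + y) = fieldTrace x + fieldTrace y.
Proof. by rewrite -[x]scale1r fieldTrace_lin mul1r scale1r. Qed.

Lemma fieldTrace0 : fieldTrace (0 : L) = 0.
Proof. by apply: (addrI (fieldTrace (0 : L))); rewrite -fieldTraceD !addr0. Qed.

Lemma fieldTraceZ (a : K) (x : L) : fieldTrace (a *: x) = a * fieldTrace x.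
Proof. by rewrite -[a *: x]addr0 fieldTrace_lin fieldTrace0 addr0. Qed.

Lemma fieldTrace_pchar (p : nat) (x : L) : p \in [pchar K] -> fieldTrace (x ^+ p) = fieldTrace x ^+ p.
Proof. by move=> pK; rewrite !fieldTraceE MxX tr_exp_pchar. Qed.

Lemma fieldTrace_pcharX (p e : nat) (x : L) : p \in [pchar K] ->
  fieldTrace (x ^+ (p ^ e)) = fieldTrace x ^+ (p ^ e).
Proof.
move=> pK; elim: e => [|e IH]; first by rewrite !expn0 !expr1.
by rewrite expnSr !exprM fieldTrace_pchar // IH.
Qed.
End Tr.

Lemma CH_sum (R : comNzRingType) n (A : 'M[R]_n) :
  \sum_(i < size (char_poly A)) (char_poly A)`_i *: A ^+ i = 0.
Proof.
case: n A => [|n] A; first exact: flatmx0.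
have := Cayley_Hamilton A; rewrite /horner_mx /horner_morph.
rewrite (@horner_coef_wide _ (size (char_poly A))); last first.
  by rewrite size_map_poly_id0 // (monicP (char_poly_monic A)) (oner_neq0 (_ : nzRingType)).
move=> H; rewrite -[RHS]H; apply: eq_bigr => i _; by rewrite coef_map /= -mulmxE mul_scalar_mx.
Qed.

Section Tr2.
Variables (K : fieldType) (L : fieldExtType K).

Lemma Mx_inj : injective (@Mx K L).
Proof.
move=> x y; rewrite /Mx => /(can_inj (passmx.mxofK (vbasisP _) (vbasisP _))).
exact: amulr_inj.
Qed.

Local Notation MxL := (@Mx K L).

Lemma MxL_lin (a : K) (x y : L) : MxL (a *: x + y) = a *: MxL x + MxL y.
Proof. by rewrite /Mx linearP passmx.mxof_linear. Qed.

Lemma Mx0 : MxL 0 = 0.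
Proof. by apply/eqP; rewrite /Mx passmx.mxof_eq0 ?vbasisP // linear0. Qed.

Lemma MxL_sum (I : eqType) (r : seq I) (c : I -> K) (v : I -> L) :
  MxL (\sum_(i <- r) c i *: v i) = \sum_(i <- r) c i *: MxL (v i).
Proof.
elim: r => [|j r IH]; first by rewrite !big_nil Mx0.
by rewrite !big_cons MxL_lin IH.
Qed.

Lemma trace_nz : separable (1%VS : {vspace L}) {:L}%VS -> ~ (forall x : L, fieldTrace x = 0).
Proof.
move=> sepL H.
set z := separable_generator (1%AS : {subfield L}) (fullv : {subfield L}).
have Ez : (fullv : {vspace L}) = <<1; z>>%VS.
  exact: (@eq_adjoin_separable_generator _ _ (fullv : {subfield L}) 1%AS sepL (subvf _)).
set A := MxL z.
have trA k : \tr (A ^+ k) = 0 by rewrite -MxX -fieldTraceE H.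
have d0 : (char_poly A)^`() = 0 by rewrite deriv_char_poly tr_adj_char_eq0.
set chi := char_poly A.
have root_chi : root (map_poly (in_alg L) chi) z.
  apply/rootP; apply: Mx_inj; rewrite Mx0.
  rewrite horner_coef size_map_poly.
  rewrite (eq_bigr (fun i : 'I_(size chi) => chi`_i *: z ^+ i)); last first.
    by move=> i _; rewrite coef_map /= mulr_algl.
  rewrite -(big_map (@nat_of_ord _) xpredT (fun i => chi`_i *: z ^+ i)).
  rewrite MxL_sum big_map -[RHS](@CH_sum _ _ A); apply: eq_bigr => i _; by rewrite MxX.
have dv : minPoly 1 z %| map_poly (in_alg L) chi.
  by apply: minPoly_dvdp => //; apply/polyOver1P; exists chi.
have Emin : minPoly 1 z = map_poly (in_alg L) chi.
  apply/eqP; rewrite -eqp_monic ?monic_minPoly ?map_monic ?char_poly_monic //.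
  rewrite -dvdp_size_eqp // size_minPoly size_map_poly size_char_poly.
  by rewrite adjoin_degreeE -Ez dimv1 divn1.
have := separable_generatorP (fullv : {subfield L}) (1%AS : {subfield L}).
by rewrite -/z separable_nz_der Emin deriv_map d0 map_poly0 eqxx.
Qed.
End Tr2.

Section Dual.
Variables (K : fieldType) (L : fieldExtType K).

Definition trw (w x : L) : K^o := fieldTrace (w * x).

Lemma trw_lin w : linear (trw w).
Proof. by move=> a x y; rewrite /trw mulrDr -scalerAr fieldTrace_lin. Qed.

HB.instance Definition _ w := GRing.isSemilinear.Build K L K^o _ (trw w)
  (GRing.semilinear_linear (trw_lin w)).

Definition Phi (w : L) : 'Hom(L, K^o) := linfun (trw w).

Lemma Phi_lin : linear Phi.
Proof.
move=> a w1 w2; apply/lfunP => x.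
by rewrite add_lfunE scale_lfunE !lfunE /= /trw mulrDl -scalerAl fieldTrace_lin.
Qed.

HB.instance Definition _ := GRing.isSemilinear.Build K L 'Hom(L, K^o) _ Phi
  (GRing.semilinear_linear Phi_lin).

Lemma Phi_surj : separable (1%VS : {vspace L}) {:L}%VS ->
  forall f : 'Hom(L, K^o), exists w, f = Phi w.
Proof.
move=> sepL f.
pose PH : 'Hom(L, 'Hom(L, K^o)) := linfun Phi.
have ker0 : lker PH == 0%VS.
  apply/lker0P => w1 w2; rewrite !lfunE /= => E.
  apply/eqP; rewrite -subr_eq0; apply/contraT => nz; exfalso.
  apply: (@trace_nz K L sepL) => y.
  have := congr1 (fun h : 'Hom(L, K^o) => h ((w1 - w2)^-1 * y)) E.
  rewrite !lfunE /= /trw => E2.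
  have -> : y = w1 * ((w1 - w2)^-1 * y) - w2 * ((w1 - w2)^-1 * y).
    by rewrite -mulrBl mulrA divff // mul1r.
  have TB (a b : L) : fieldTrace (a - b) = fieldTrace a - fieldTrace b.
    by apply: (addIr (fieldTrace b)); rewrite -fieldTraceD !subrK.
  by rewrite TB E2 subrr.
have imf : limg PH = fullv.
  apply/eqP; rewrite eqEdim subvf /= limg_dim_eq; last by rewrite (eqP ker0) capv0.
  by rewrite !dimvf /= /dim /= muln1.
have : f \in limg PH by rewrite imf memvf.
by case/memv_imgP => w _ ->; exists w; rewrite lfunE.
Qed.
End Dual.

Section Dual2.
Variables (K : fieldType) (L : fieldExtType K) (g : L -> K).
Hypothesis glin : forall (a : K) (x y : L), g (a *: x + y) = a * g x + g y.
Definition gK : L -> K^o := g.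
Lemma gK_lin : linear gK.
Proof. by move=> a x y; rewrite /gK glin. Qed.
HB.instance Definition _ := GRing.isSemilinear.Build K L K^o _ gK
  (GRing.semilinear_linear gK_lin).

Lemma trace_dual : separable (1%VS : {vspace L}) {:L}%VS ->
  exists w : L, forall x, g x = fieldTrace (w * x).
Proof.
move=> sepL; have [w Ew] := @Phi_surj K L sepL (linfun gK).
exists w => x; have := congr1 (fun h : 'Hom(L, K^o) => h x) Ew.
by rewrite !lfunE.
Qed.
End Dual2.

Set Implicit Arguments. Unset Strict Implicit.

Section Subring.
Variables (T : comNzRingType) (A : pred T).
Hypothesis hA : is_subring A.

Lemma sr1 : 1 \in A. Proof. by case: hA. Qed.
Lemma srB x y : x \in A -> y \in A -> x - y \in A.
Proof. by case: hA => _ h xA yA; case: (h x y xA yA). Qed.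
Lemma srM x y : x \in A -> y \in A -> x * y \in A.
Proof. by case: hA => _ h xA yA; case: (h x y xA yA). Qed.
Lemma sr0 : 0 \in A. Proof. by rewrite -(subrr 1) srB // sr1. Qed.
Lemma srN x : x \in A -> - x \in A. Proof. by move=> xA; rewrite -sub0r srB // sr0. Qed.
Lemma srD x y : x \in A -> y \in A -> x + y \in A.
Proof. by move=> xA yA; rewrite -[y]opprK srB // srN. Qed.
Lemma srX x n : x \in A -> x ^+ n \in A.
Proof. by move=> xA; elim: n => [|n IH]; rewrite ?expr0 ?sr1 // exprS srM. Qed.
Lemma sr_sum (I : Type) (r : seq I) (F : I -> T) :
  (forall i, F i \in A) -> \sum_(i <- r) F i \in A.
Proof.
move=> FA; elim: r => [|i r IH]; first by rewrite big_nil sr0.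
by rewrite big_cons srD.
Qed.
End Subring.

Lemma common_denom (K : fieldType) (R : pred K) :
  is_subring R -> is_frac_field R ->
  forall s : seq K, exists b, [/\ b \in R, b != 0 & all (fun x => b * x \in R) s].
Proof.
move=> hR hF; elim => [|x s [b [bR bnz bs]]].
  by exists 1; rewrite sr1 // oner_neq0.
have [a [d [aR dR dnz ->]]] := hF x.
exists (b * d); split; first exact: srM.
  by rewrite mulf_neq0.
rewrite /= -mulrA (mulrCA d) divff // mulr1 srM //=.
apply/allP => y ys; rewrite mulrAC srM //.
move: (allP bs y ys) => /=; done.
Qed.

Section Setup.
Variables (K : fieldType) (L : fieldExtType K) (R : pred K) (S : pred L) (psi : L -> K).
Hypotheses (hR : is_subring R) (hS : is_subring S) (hRf : is_frac_field R) (hSf : is_frac_field S).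
Hypothesis RS : forall r, r \in R -> r%:A \in S.
Hypothesis psiD : forall s t, s \in S -> t \in S -> psi (s + t) = psi s + psi t.
Hypothesis psiZ : forall r s, r \in R -> s \in S -> psi (r%:A * s) = r * psi s.

Lemma psi0 : psi 0 = 0.
Proof.
have := psiD (sr0 hS) (sr0 hS); rewrite addr0 => h.
by apply: (addrI (psi 0)); rewrite -h addr0.
Qed.

Lemma psi_sum (I : Type) (r : seq I) (c : I -> K) (v : I -> L) :
  (forall i, c i \in R) -> (forall i, v i \in S) ->
  \sum_(i <- r) (c i)%:A * v i \in S /\
  psi (\sum_(i <- r) (c i)%:A * v i) = \sum_(i <- r) c i * psi (v i).
Proof.
move=> cR vS; elim: r => [|i r [IH1 IH2]]; first by rewrite !big_nil psi0 sr0.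
have iS : (c i)%:A * v i \in S by rewrite srM // RS.
by rewrite !big_cons srD // psiD // psiZ // IH2.
Qed.

Variables (g : seq L).
Hypothesis gS : all (fun s => s \in S) g.
Hypothesis gspan : forall s, s \in S -> exists c : nat -> K,
      (forall i, c i \in R) /\ s = \sum_(i < size g) (c i)%:A * g`_i.

Let gt := in_tuple g.

Lemma gtS (i : 'I_(size g)) : gt`_i \in S.
Proof. exact: (allP gS) _ (mem_nth 0 (ltn_ord i)). Qed.

Lemma S_span s : s \in S -> s \in <<gt>>%VS.
Proof.
move=> sS; have [c [cR ->]] := gspan sS.
apply: memv_suml => i _; rewrite mulr_algl memvZ // memv_span //.
exact: (mem_nth 0 (ltn_ord i)).
Qed.

Lemma span_mul u v : u \in <<gt>>%VS -> v \in <<gt>>%VS -> u * v \in <<gt>>%VS.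
Proof.
move=> uV vV; rewrite (coord_span uV) (coord_span vV) mulr_suml.
apply: memv_suml => i _; rewrite -scalerAl mulr_sumr memvZ //.
apply: memv_suml => j _; rewrite -scalerAr memvZ // S_span // srM //; exact: gtS.
Qed.

Lemma span_full x : x \in <<gt>>%VS.
Proof.
have [a [b [aS bS bnz ->]]] := hSf x.
have sub : (amulr b @: <<gt>> <= <<gt>>)%VS.
  by apply/subvP => _ /memv_imgP [u uV ->]; rewrite lfunE /= span_mul // S_span.
have k0 : lker (amulr b) == 0%VS by rewrite lker0_amulr // unitfE.
have eqV : (amulr b @: <<gt>>)%VS = <<gt>>%VS.
  by apply/eqP; rewrite eqEdim sub /= limg_dim_eq // (eqP k0) capv0.
have : 1 \in (amulr b @: <<gt>>)%VS by rewrite eqV S_span // sr1.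
case/memv_imgP => y yV; rewrite lfunE /= => y1.
have -> : b^-1 = y by rewrite -[y](mulfK bnz) -y1 mul1r.
by rewrite span_mul // S_span.
Qed.

Lemma denom x : exists b, [/\ b \in R, b != 0 & b%:A * x \in S].
Proof.
have [b [bR bnz bs]] := common_denom hR hRf [seq coord gt i x | i <- enum 'I_(size g)].
exists b; split => //.
rewrite (coord_span (span_full x)) mulr_sumr.
rewrite (eq_bigr (fun i => (b * coord gt i x)%:A * gt`_i)); last first.
  by move=> i _; rewrite !mulr_algl scalerA.
case: (@psi_sum _ (index_enum 'I_(size g)) (fun i => b * coord gt i x) (fun i => gt`_i)) => //.
- move=> i; apply: (allP bs); exact: map_f (mem_enum _ _).
- exact: gtS.
Qed.

Definition psie (x : L) : K := \sum_(i < size g) coord gt i x * psi gt`_i.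

Lemma psie_lin (a : K) (x y : L) : psie (a *: x + y) = a * psie x + psie y.
Proof.
rewrite /psie mulr_sumr -big_split /=; apply: eq_bigr => i _.
by rewrite linearP /= mulrDl mulrA.
Qed.

Lemma WD (c : 'I_(size g) -> K) :
  \sum_i c i *: gt`_i = 0 -> \sum_i c i * psi gt`_i = 0.
Proof.
move=> E.
have [b [bR bnz bs]] := common_denom hR hRf [seq c i | i <- enum 'I_(size g)].
have cR i : b * c i \in R by apply: (allP bs); exact: map_f (mem_enum _ _).
case: (@psi_sum _ (index_enum 'I_(size g)) (fun i => b * c i) (fun i => gt`_i)) => //.
  exact: gtS.
move=> _ E2; apply: (mulfI bnz); rewrite mulr0 mulr_sumr.
rewrite (eq_bigr (fun i => b * c i * psi gt`_i)); last by move=> i _; rewrite mulrA.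
rewrite -E2 -psi0; congr psi.
rewrite (eq_bigr (fun i => b *: (c i *: gt`_i))); last first.
  by move=> i _; rewrite mulr_algl scalerA.
by rewrite -scaler_sumr E scaler0.
Qed.

Lemma psie_S s : s \in S -> psie s = psi s.
Proof.
move=> sS; have [c [cR Es]] := gspan sS.
have E : \sum_i (coord gt i s - c i) *: gt`_i = 0.
  rewrite (eq_bigr (fun i => coord gt i s *: gt`_i - (c i)%:A * gt`_i)); last first.
    by move=> i _; rewrite scalerBl mulr_algl.
  by rewrite sumrB -coord_span ?S_span // -Es subrr.
have := WD E.
rewrite (eq_bigr (fun i => coord gt i s * psi gt`_i - c i * psi gt`_i)); last first.
  by move=> i _; rewrite mulrBl.
rewrite sumrB => /eqP; rewrite subr_eq0 => /eqP; rewrite /psie => ->.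
case: (@psi_sum _ (index_enum 'I_(size g)) (fun i => c i) (fun i => gt`_i)) => //.
  exact: gtS.
by move=> _ <-; rewrite [in RHS]Es.
Qed.
End Setup.

Unset Implicit Arguments. Set Strict Implicit.

Theorem proposition4p4 (p e : nat) (K : fieldType) (L : fieldExtType K)
  (R : pred K) (S : pred L)
  (phi : K -> K) (phibar : L -> L) (psi : L -> K) :
  (* characteristic p > 0 *)
  p \in [pchar K] ->
  (* R, S normal F-finite domains with fraction fields K, L *)
  is_subring R -> is_subring S ->
  is_frac_field R -> is_frac_field S ->
  is_normal R -> is_normal S ->
  F_finite p R -> F_finite p S ->
  (* R ⊆ S, module-finite, generically separable *)
  (forall r, r \in R -> r%:A \in S) ->
  module_finite R S ->
  separable (1%VS : {vspace L}) {:L}%VS ->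
  (* phi ∈ Hom_R(R^{1/p^e}, R), non-zero *)
  is_pinv_linear (p ^ e) R phi ->
  (exists r, r \in R /\ phi r != 0) ->
  (* phibar ∈ Hom_S(S^{1/p^e}, S) extends phi *)
  is_pinv_linear (p ^ e) S phibar ->
  (forall r, r \in R -> phibar (r%:A) = (phi r)%:A) ->
  (* psi ∈ Hom_R(S, R) *)
  (forall s, s \in S -> psi s \in R) ->
  (forall s t, s \in S -> t \in S -> psi (s + t) = psi s + psi t) ->
  (forall r s, r \in R -> s \in S -> psi (r%:A * s) = r * psi s) ->
  (* psi ∘ phibar = phi ∘ psi^{1/p^e} on S^{1/p^e} *)
  (forall s, s \in S -> psi (phibar s) = phi (psi s)) ->
  exists u : L, u ^+ (p ^ e) = u /\
    forall s, s \in S -> psi s = fieldTrace (u * s).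
Proof.
move=> pK hR hS hRf hSf _ _ _ _ RS [g [gS gspan]] sepL [phiR phiD phiZ]
  [r0 [r0R phir0]] [pbS pbD pbZ] pbE psiR psiD psiZ psicomp.
have pp := pcharf_prime pK.
have q0 : (0 < p ^ e)%N by rewrite expn_gt0 prime_gt0.
have phiB x y : x \in R -> y \in R -> phi (x - y) = phi x - phi y.
  by move=> xR yR; apply: (addIr (phi y)); rewrite -phiD ?srB // !subrK.
have frob b : b \in S -> psi (b ^+ (p ^ e)) = psi b ^+ (p ^ e).
  move=> bS; have bqS : b ^+ (p ^ e) \in S by exact: srX.
  have psibR := psiR _ bS; have psibqR := psiR _ bqS.
  have key r : r \in R -> phi (r * psi (b ^+ (p ^ e))) = phi (psi b ^+ (p ^ e) * r).
    move=> rR; have sS : b ^+ (p ^ e) * r%:A \in S by rewrite srM // RS.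
    have := psicomp _ sS; rewrite pbZ ?RS // pbE //.
    rewrite [b * _]mulrC psiZ ?phiR // [b ^+ _ * _]mulrC psiZ ?RS // => E.
    by rewrite -E phiZ // mulrC.
  set c := psi (b ^+ (p ^ e)) - psi b ^+ (p ^ e).
  have cR : c \in R by rewrite srB // srX.
  have c0 r : r \in R -> phi (c * r) = 0.
    move=> rR; rewrite mulrBl [_ * r]mulrC phiB ?srM ?srX //.
    by rewrite key // subrr.
  apply/eqP; rewrite -subr_eq0 -/c; apply/contraT => cnz.
  have := c0 (c ^+ (p ^ e).-1 * r0) (srM hR (srX hR _ cR) r0R).
  rewrite mulrA -exprS prednK // phiZ // => /eqP.
  by rewrite mulf_eq0 (negPf cnz) (negPf phir0).
have [w Ew] := @trace_dual K L (psie psi g) (psie_lin psi g) sepL.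
have Ew' s : s \in S -> psi s = fieldTrace (w * s).
  by move=> sS; rewrite -Ew (psie_S hR hS hRf RS psiD psiZ gS gspan sS).
exists w; split => //.
case E0: e => [|e']; first by rewrite expn0 expr1.
rewrite E0 in frob.
set q := (p ^ e'.+1)%N.
have pL : p \in [pchar L] by rewrite (pchar_lalg L).
set d := w - w ^+ q.
have TB (a b : L) : fieldTrace (a - b) = fieldTrace a - fieldTrace b.
  by apply: (addIr (fieldTrace b)); rewrite -fieldTraceD !subrK.
have T1 b : b \in S -> fieldTrace (d * b ^+ q) = 0.
  move=> bS; rewrite mulrBl TB -Ew' ?srX // frob // Ew' //.
  by rewrite -fieldTrace_pcharX // exprMn subrr.
have T2 x : fieldTrace (d * x ^+ q) = 0.
  have [b [bR bnz bxS]] := denom hR hS hRf hSf RS psiD psiZ gS gspan x.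
  have := T1 _ bxS; rewrite mulr_algl exprZn -scalerAr.
  rewrite (@fieldTraceZ K L (b ^+ q) (d * x ^+ q)).
  by move/eqP; rewrite mulf_eq0 expf_eq0 (negPf bnz) andbF /= => /eqP.
have T3 y : fieldTrace (d * y) = 0.
  have sy : separable_element 1 y by apply: (separableP sepL); rewrite memvf.
  rewrite (pcharf_p_separable _ _ e' pL) in sy.
  rewrite -(Fadjoin_poly_eq sy) horner_coef mulr_sumr.
  have : Fadjoin_poly 1 (y ^+ q) y \is a polyOver 1%VS by exact: Fadjoin_polyOver.
  move/polyOverP => cf.
  elim: (index_enum _) => [|i r IH]; first by rewrite big_nil fieldTrace0.
  rewrite big_cons fieldTraceD IH addr0.
  have /vlineP [k ->] := cf i.
  by rewrite -/q mulr_algl -scalerAr (@fieldTraceZ K L) -exprM mulnC exprM T2 mulr0.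
have d0 : d = 0.
  apply/eqP; apply/contraT => dnz; exfalso; apply: (@trace_nz K L sepL) => y.
  by rewrite -[y]mul1r -(divff dnz) -mulrA T3.
by apply/eqP; rewrite eq_sym -subr_eq0 -/d d0.
Qed.
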